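(* Let $q$ be an odd prime power, let $\omega$ be a non-square in $\mathbb F_q$ and $\epsilon\in\mathbb F_{q^2}$ with $\epsilon^2=\omega$; write $z=z_1+\epsilon z_2$ ($z_1,z_2\in\mathbb F_q$) for $z\in\mathbb F_{q^2}$. Let $\mathcal C: aX^2+bXY+cXZ+YZ+eZ^2=0$ be a non-singular conic of $\mathrm{PG}(2,q^2)$ with $a,b,c,e\in\mathbb F_{q^2}$ and $b\notin\mathbb F_q$ (i.e. $b_2\ne0$). Put $A=-a_2b_1+a_1b_2$, $B=b_2c_1-b_1c_2+a_1\cdot 0-a_2$, $C=c_1\cdot 0-c_2+b_2e_1-b_1e_2$, $D=-e_2$ (the general formulas $A=-a_2b_1+a_1b_2$, $B=b_2c_1-b_1c_2-a_2d_1+a_1d_2$, $C=-c_2d_1+c_1d_2+b_2e_1-b_1e_2$, $D=d_2e_1-d_1e_2$ with $d=1$, i.e. $d_1=1,d_2=0$), and let $\mathcal S$ be the (irreducible) cubic surface of $\mathrm{PG}(3,q)$ in coordinates $(t_1:t_2:X:Z)$ given by $$2t_1t_2(b_1X+d_1Z)-(t_1^2+\omega t_2^2)(b_2X+d_2Z)+AX^3+BX^2Z+CXZ^2+DZ^3=0$$ (with $d_1=1,d_2=0$). Then $\mathcal S$ has at most one singular point; if $P$ is a singular point of $\mathcal S$, then $P$ is a double point and $P$ is defined over $\mathbb F_q$.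
   Context: Singular points are considered over the algebraic closure of $\mathbb F_q$. The normalization $d=1$ and the irreducibility condition $b_1d_2-b_2d_1\ne0$ are the standing assumptions of the section in which the result is stated. *)

(* Defs.v *)
From HB Require Import structures.
From mathcomp Require Import all_boot all_order all_algebra all_field.
From mathcomp Require Import mpoly.
Set Implicit Arguments. Unset Strict Implicit. Unset Printing Implicit Defensive.
Import Order.TTheory GRing.Theory Num.Theory.
Local Open Scope ring_scope.

Definition i0 {n} : 'I_n.+1 := @Ordinal n.+1 0 erefl.
Definition i1 {n} : 'I_n.+2 := @Ordinal n.+2 1 erefl.
Definition i2 {n} : 'I_n.+3 := @Ordinal n.+3 2 erefl.
Definition i3 {n} : 'I_n.+4 := @Ordinal n.+4 3 erefl.

Definition conic_poly (R : comRingType) (a b c d e : R) : {mpoly R[3]} :=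
  a *: ('X_i0 * 'X_i0) + b *: ('X_i0 * 'X_i1) + c *: ('X_i0 * 'X_i2)
  + d *: ('X_i1 * 'X_i2) + e *: ('X_i2 * 'X_i2).

Definition singular_point (R : comRingType) (n : nat) (p : {mpoly R[n]})
  (v : 'I_n -> R) : Prop :=
  (exists i, v i != 0) /\ p.@[v] = 0 /\ forall i, (mderiv i p).@[v] = 0.

(* A singular point is a double point if its multiplicity is exactly 2,
   i.e. some second partial derivative does not vanish at it. *)
Definition double_point (R : comRingType) (n : nat) (p : {mpoly R[n]})
  (v : 'I_n -> R) : Prop :=
  singular_point p v /\ exists i j, (mderiv j (mderiv i p)).@[v] != 0.

Definition proj_eq (R : comRingType) (n : nat) (v w : 'I_n -> R) : Prop :=
  exists lambda : R, lambda != 0 /\ forall i, v i = lambda * w i.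

Definition surface_poly (R : comRingType) (w b1 b2 d1 d2 A B C D : R)
  : {mpoly R[4]} :=
  let t1 := 'X_i0 in let t2 := 'X_i1 in let X := 'X_i2 in let Z := 'X_i3 in
  2%:R *: (t1 * t2 * (b1 *: X + d1 *: Z))
  - (t1 * t1 + w *: (t2 * t2)) * (b2 *: X + d2 *: Z)
  + A *: (X * X * X) + B *: (X * X * Z) + C *: (X * Z * Z) + D *: (Z * Z * Z).

Definition surfcoefA (R : ringType) (a1 a2 b1 b2 : R) : R := - a2 * b1 + a1 * b2.
Definition surfcoefB (R : ringType) (a1 a2 b1 b2 c1 c2 d1 d2 : R) : R :=
  b2 * c1 - b1 * c2 - a2 * d1 + a1 * d2.
Definition surfcoefC (R : ringType) (b1 b2 c1 c2 d1 d2 e1 e2 : R) : R :=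
  - c2 * d1 + c1 * d2 + b2 * e1 - b1 * e2.
Definition surfcoefD (R : ringType) (d1 d2 e1 e2 : R) : R := d2 * e1 - d1 * e2.

(* Main.v *)
Require Import Defs.
From HB Require Import structures.
From mathcomp Require Import all_boot all_order all_algebra all_field.
From mathcomp Require Import mpoly.
From mathcomp Require Import ring.
Import GRing.Theory.
Set Implicit Arguments. Unset Strict Implicit. Unset Printing Implicit Defensive.
Local Open Scope ring_scope.
Lemma mderivXU (R : comNzRingType) n (i j : 'I_n) : mderiv j ('X_i : {mpoly R[n]}) = (i == j)%:R.
Proof.
rewrite mderivX mnm1E; case: eqP => [->|_]; last by rewrite scale0r.
have -> : (U_(j) - U_(j))%MM = 0%MM by apply/mnmP=> k; rewrite !mnmE subnn.
by rewrite mpolyX0 scale1r.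
Qed.
Section S.
Variables (R : comNzRingType) (w b1 b2 d1 d2 A B C D : R) (v : 'I_4 -> R).
Local Notation SP := (surface_poly w b1 b2 d1 d2 A B C D).
Ltac dsimp := rewrite /surface_poly /= !(mderivD, mderivN, mderivM, mderivZ, mderivXU, mderivC) /=;
  rewrite !(mevalD, mevalN, mevalM, mevalZ, mevalXU, rmorph_nat, mevalC); ring.
Lemma surf_eval : SP.@[v] =
  2 * (v i0 * v i1 * (b1 * v i2 + d1 * v i3)) - (v i0 * v i0 + w * (v i1 * v i1)) * (b2 * v i2 + d2 * v i3)
  + A * (v i2 * v i2 * v i2) + B * (v i2 * v i2 * v i3) + C * (v i2 * v i3 * v i3) + D * (v i3 * v i3 * v i3).
Proof. by rewrite /surface_poly /= !(mevalD, mevalN, mevalM, mevalZ, mevalXU). Qed.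
Lemma surf_d0 : (mderiv i0 SP).@[v] =
  2 * (v i1 * (b1 * v i2 + d1 * v i3)) - 2 * v i0 * (b2 * v i2 + d2 * v i3).
Proof. dsimp. Qed.
Lemma surf_d1 : (mderiv i1 SP).@[v] =
  2 * (v i0 * (b1 * v i2 + d1 * v i3)) - 2 * w * v i1 * (b2 * v i2 + d2 * v i3).
Proof. dsimp. Qed.
Lemma surf_d2 : (mderiv i2 SP).@[v] =
  2 * (v i0 * v i1 * b1) - (v i0 * v i0 + w * (v i1 * v i1)) * b2
  + 3 * A * (v i2 * v i2) + 2 * B * (v i2 * v i3) + C * (v i3 * v i3).
Proof. dsimp. Qed.
Lemma surf_d3 : (mderiv i3 SP).@[v] =
  2 * (v i0 * v i1 * d1) - (v i0 * v i0 + w * (v i1 * v i1)) * d2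
  + B * (v i2 * v i2) + 2 * C * (v i2 * v i3) + 3 * D * (v i3 * v i3).
Proof. dsimp. Qed.
Lemma surf_d00 : (mderiv i0 (mderiv i0 SP)).@[v] = - 2 * (b2 * v i2 + d2 * v i3).
Proof. dsimp. Qed.
Lemma surf_d01 : (mderiv i1 (mderiv i0 SP)).@[v] = 2 * (b1 * v i2 + d1 * v i3).
Proof. dsimp. Qed.
End S.


Definition delta1 (K : ringType) (W a1 b1 b2 c1 c2 e1 e2 : K) : K :=
  a1 + e1 * (b1 * b1 + W * (b2 * b2)) + 2 * W * e2 * b1 * b2 - b1 * c1 - W * b2 * c2.
Definition delta2 (K : ringType) (W a2 b1 b2 c1 c2 e1 e2 : K) : K :=
  a2 + e2 * (b1 * b1 + W * (b2 * b2)) + 2 * e1 * b1 * b2 - b1 * c2 - b2 * c1.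

Lemma core (K : fieldType) (W a1 a2 b1 b2 c1 c2 e1 e2 t1 t2 X Z : K) :
  (2 : K) != 0 -> W != 0 -> b2 != 0 ->
  (forall r, r * r = W -> delta1 W a1 b1 b2 c1 c2 e1 e2 - r * delta2 W a2 b1 b2 c1 c2 e1 e2 != 0) ->
  forall sA sB sC sD : K,
  sA = surfcoefA a1 a2 b1 b2 -> sB = surfcoefB a1 a2 b1 b2 c1 c2 1 0 ->
  sC = surfcoefC b1 b2 c1 c2 1 0 e1 e2 -> sD = surfcoefD 1 0 e1 e2 ->
  2 * (t1 * t2 * (b1 * X + 1 * Z)) - (t1 * t1 + W * (t2 * t2)) * (b2 * X + 0 * Z)
  + sA * (X * X * X) + sB * (X * X * Z) + sC * (X * Z * Z) + sD * (Z * Z * Z) = 0 ->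
  2 * (t2 * (b1 * X + 1 * Z)) - 2 * t1 * (b2 * X + 0 * Z) = 0 ->
  2 * (t1 * (b1 * X + 1 * Z)) - 2 * W * t2 * (b2 * X + 0 * Z) = 0 ->
  2 * (t1 * t2 * b1) - (t1 * t1 + W * (t2 * t2)) * b2
  + 3 * sA * (X * X) + 2 * sB * (X * Z) + sC * (Z * Z) = 0 ->
  2 * (t1 * t2 * 1) - (t1 * t1 + W * (t2 * t2)) * 0
  + sB * (X * X) + 2 * sC * (X * Z) + 3 * sD * (Z * Z) = 0 ->
  t1 = 0 /\ t2 = 0.
Proof.
move=> h2 hW hb2 hD sA sB sC sD hsA hsB hsC hsD E0 E1 E2 E3 E4.
have m2 : forall x : K, 2 * x = 0 -> x = 0.
  by move=> x /eqP; rewrite mulf_eq0 (negbTE h2) /= => /eqP.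
have F1 : t2 * (b1 * X + Z) = t1 * (b2 * X).
  by apply/eqP; rewrite -subr_eq0; apply/eqP/m2; rewrite -E1; ring.
have F2 : t1 * (b1 * X + Z) = W * t2 * (b2 * X).
  by apply/eqP; rewrite -subr_eq0; apply/eqP/m2; rewrite -E2; ring.
case: (boolP ((t1 == 0) && (t2 == 0))) => [/andP[/eqP-> /eqP->]//|]; rewrite negb_and => ht; exfalso.
have [h20|h2n0] := eqVneq (b2 * X) 0.
  have X0 : X = 0 by move/eqP: h20; rewrite mulf_eq0 (negbTE hb2) => /eqP.
  have Z0 : Z = 0.
    have h10 : b1 * X + Z = 0.
      case/orP: ht => ht.
        by move/eqP: F2; rewrite h20 mulr0 mulf_eq0 (negbTE ht) => /eqP.
      by move/eqP: F1; rewrite h20 mulr0 mulf_eq0 (negbTE ht) => /eqP.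
    by move: h10; rewrite X0 mulr0 add0r.
  have T12 : t1 * t2 = 0 by apply: m2; rewrite -E4 X0 Z0; ring.
  have T2 : t1 * t1 + W * (t2 * t2) = 0.
    have : (t1 * t1 + W * (t2 * t2)) * b2 = 0 by apply/eqP; rewrite -oppr_eq0; apply/eqP; rewrite -E3 X0 Z0 T12; ring.
    by move/eqP; rewrite mulf_eq0 (negbTE hb2) orbF => /eqP.
  move/eqP: T12; rewrite mulf_eq0 => /orP[] /eqP T.
    move: T2; rewrite T mul0r add0r => /eqP; rewrite mulf_eq0 (negbTE hW) mulf_eq0 orbb /= => /eqP T2'.
    by move: ht; rewrite T T2' eqxx.
  move: T2; rewrite T mul0r mulr0 addr0 => /eqP; rewrite mulf_eq0 orbb => /eqP T1'.
  by move: ht; rewrite T T1' eqxx.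
set r := (b1 * X + Z) / (b2 * X).
have hr1 : b1 * X + Z = r * (b2 * X) by rewrite /r mulfVK.
have ht1 : t1 = r * t2.
  by apply: (mulIf h2n0); rewrite -F1 hr1; ring.
have ht2 : t2 != 0.
  by apply/negP => /eqP t20; move: ht; rewrite ht1 t20 mulr0 eqxx.
have hrr : r * r = W.
  apply: (mulIf h2n0); apply: (mulfI ht2).
  rewrite [RHS](_ : _ = W * t2 * (b2 * X)); last by ring.
  by rewrite -F2 ht1 hr1; ring.
have hZ : Z = (r * b2 - b1) * X.
  by apply: (addrI (b1 * X)); rewrite hr1; ring.
have hX : X != 0 by apply: contraNneq h2n0 => ->; rewrite mulr0.
have f0 : sA * (X * X * X) + sB * (X * X * Z) + sC * (X * Z * Z) + sD * (Z * Z * Z) = 0.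
  by rewrite -E0 mul1r mul0r addr0 hr1 ht1 -hrr; ring.
have key : sA * (X * X * X) + sB * (X * X * ((r * b2 - b1) * X)) + sC * (X * ((r * b2 - b1) * X) * ((r * b2 - b1) * X)) + sD * (((r * b2 - b1) * X) * ((r * b2 - b1) * X) * ((r * b2 - b1) * X))
  = b2 * X * (X * X) * (delta1 (r * r) a1 b1 b2 c1 c2 e1 e2 - r * delta2 (r * r) a2 b1 b2 c1 c2 e1 e2).
  by rewrite hsA hsB hsC hsD /surfcoefA /surfcoefB /surfcoefC /surfcoefD /delta1 /delta2; ring.
have nz : b2 * X * (X * X) != 0 by rewrite !mulf_neq0.
move: (hD r hrr); rewrite -hrr => /negP; apply.
by move: f0; rewrite hZ key => /eqP; rewrite mulf_eq0 (negbTE nz).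
Qed.

Definition cubf (K : ringType) (A B C D X Z : K) := A*(X*X*X) + B*(X*X*Z) + C*(X*Z*Z) + D*(Z*Z*Z).
Definition cubX (K : ringType) (A B C D X Z : K) := 3*A*(X*X) + 2*B*(X*Z) + C*(Z*Z).
Definition cubZ (K : ringType) (A B C D X Z : K) := B*(X*X) + 2*C*(X*Z) + 3*D*(Z*Z).

Lemma cubic_unique (K : fieldType) (A B C D X0 Z0 X1 Z1 : K) : (2 : K) != 0 ->
  [|| A != 0, B != 0, C != 0 | D != 0] ->
  cubf A B C D X0 Z0 = 0 -> cubX A B C D X0 Z0 = 0 -> cubZ A B C D X0 Z0 = 0 ->
  cubf A B C D X1 Z1 = 0 -> cubX A B C D X1 Z1 = 0 -> cubZ A B C D X1 Z1 = 0 ->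
  X0 * Z1 = X1 * Z0.
Proof.
move=> h2 hnz f0 fX0 fZ0 f1 fX1 fZ1.
apply/eqP; rewrite -subr_eq0; apply/negPn/negP => hd.
have all0 : forall X Z, cubf A B C D X Z = 0.
  move=> X Z.
  pose x := (X * Z1 - Z * X1) / (X0 * Z1 - X1 * Z0).
  pose z := (X0 * Z - Z0 * X) / (X0 * Z1 - X1 * Z0).
  have eX : X = x * X0 + z * X1 by rewrite /x /z; field.
  have eZ : Z = x * Z0 + z * Z1 by rewrite /x /z; field.
  have -> : cubf A B C D X Z = x * x * x * cubf A B C D X0 Z0
     + x * x * z * (cubX A B C D X0 Z0 * X1 + cubZ A B C D X0 Z0 * Z1)
     + x * z * z * (cubX A B C D X1 Z1 * X0 + cubZ A B C D X1 Z1 * Z0)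
     + z * z * z * cubf A B C D X1 Z1.
    by rewrite eX eZ /cubf /cubX /cubZ; ring.
  by rewrite f0 fX0 fZ0 f1 fX1 fZ1; ring.
have hA : A = 0 by move: (all0 1 0); rewrite /cubf; move=> <-; ring.
have hD : D = 0 by move: (all0 0 1); rewrite /cubf; move=> <-; ring.
have hBC1 : B + C = 0 by move: (all0 1 1); rewrite /cubf hA hD; move=> <-; ring.
have hBC2 : 2 * B = 0.
  have H := all0 1 (-1); rewrite hA hD in H.
  have e : 2 * B = (B + C) - cubf 0 B C 0 1 (-1) by rewrite /cubf; ring.
  by rewrite e hBC1 H subr0.
have hB : B = 0 by move/eqP: hBC2; rewrite mulf_eq0 (negbTE h2) => /eqP.
have hC : C = 0 by move: hBC1; rewrite hB add0r.
by move: hnz; rewrite hA hB hC hD eqxx.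
Qed.

Section Frob.
Variables (F : finFieldType) (M : fieldType) (phi : {rmorphism F -> M}).
Lemma fr_nat_pchar : [pchar M].-nat #|F|.
Proof.
have [p pr_p chp] := finPcharP F.
have -> : #|F| = (p ^ logn p #|F|)%N by exact: (card_pprimeChar chp).
rewrite pnatX pnatE //; apply/orP; left.
by rewrite (fmorph_pchar phi).
Qed.
Lemma frD (x y : M) : (x + y) ^+ #|F| = x ^+ #|F| + y ^+ #|F|.
Proof. exact: exprDn_pchar fr_nat_pchar. Qed.
Lemma fr_phi (c : F) : (phi c) ^+ #|F| = phi c.
Proof. by rewrite -rmorphXn expf_card. Qed.
Lemma fr_nat n : (n%:R : M) ^+ #|F| = n%:R.
Proof. by rewrite -(rmorph_nat phi) fr_phi. Qed.
Lemma fr_fixed (y : M) : y ^+ #|F| = y -> exists c, y = phi c.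
Proof.
move=> hy.
have := congr1 (map_poly phi) (finField_genPoly F).
rewrite rmorphB /= map_polyXn map_polyX rmorph_prod /= => /(congr1 (horner^~ y)).
rewrite !hornerE horner_prod hy subrr => /esym/eqP; rewrite prodf_seq_eq0 => /hasP[c _].
rewrite map_polyXsubC hornerXsubC => /eqP/subr0_eq ->; by exists c.
Qed.
End Frob.

Lemma conic_delta (K : fieldType) (a b c e : K) : (2 : K) != 0 ->
  (forall v, ~ singular_point (conic_poly a b c 1 e) v) -> a + e * (b * b) - b * c != 0.
Proof.
move=> h2 H; apply/negP => /eqP hd.
pose v := fun i : 'I_3 => match val i with 0 => 1 | 1 => 2 * e * b - c | _ => - b end.
apply: (H v); split; first by exists i0; rewrite /v /= oner_neq0.
split.
  rewrite /conic_poly !(mevalD, mevalM, mevalZ, mevalXU) /v /= -hd; ring.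
case=> [[|[|[|//]]] Hi];
 rewrite /conic_poly !(mderivD, mderivM, mderivZ, mderivXU) /=;
 rewrite !(mevalD, mevalM, mevalZ, mevalXU, rmorph_nat) /v /=.
- by rewrite -[RHS](mulr0 2) -hd; ring.
- ring.
- ring.
Qed.

Section Frob2.
Variables (F : finFieldType) (M : fieldType) (phi : {rmorphism F -> M}).
Lemma fr_cubf (cA cB cC cD : F) (X Z : M) :
  cubf (phi cA) (phi cB) (phi cC) (phi cD) (X ^+ #|F|) (Z ^+ #|F|)
  = (cubf (phi cA) (phi cB) (phi cC) (phi cD) X Z) ^+ #|F|.
Proof. by rewrite /cubf !(frD phi) !exprMn !(fr_phi phi). Qed.
Lemma fr_cubX (cA cB cC cD : F) (X Z : M) :
  cubX (phi cA) (phi cB) (phi cC) (phi cD) (X ^+ #|F|) (Z ^+ #|F|)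
  = (cubX (phi cA) (phi cB) (phi cC) (phi cD) X Z) ^+ #|F|.
Proof. by rewrite /cubX !(frD phi) !exprMn !(fr_phi phi) !(fr_nat phi). Qed.
Lemma fr_cubZ (cA cB cC cD : F) (X Z : M) :
  cubZ (phi cA) (phi cB) (phi cC) (phi cD) (X ^+ #|F|) (Z ^+ #|F|)
  = (cubZ (phi cA) (phi cB) (phi cC) (phi cD) X Z) ^+ #|F|.
Proof. by rewrite /cubZ !(frD phi) !exprMn !(fr_phi phi) !(fr_nat phi). Qed.
End Frob2.

Section PhiCoef.
Variables (F M : fieldType) (phi : {rmorphism F -> M}).
Variables (w a1 a2 b1 b2 c1 c2 d1 d2 e1 e2 : F).
Lemma phiA : phi (surfcoefA a1 a2 b1 b2) = surfcoefA (phi a1) (phi a2) (phi b1) (phi b2).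
Proof. by rewrite /surfcoefA !(rmorphD, rmorphB, rmorphM, rmorphN). Qed.
Lemma phiB : phi (surfcoefB a1 a2 b1 b2 c1 c2 d1 d2) =
  surfcoefB (phi a1) (phi a2) (phi b1) (phi b2) (phi c1) (phi c2) (phi d1) (phi d2).
Proof. by rewrite /surfcoefB !(rmorphD, rmorphB, rmorphM, rmorphN). Qed.
Lemma phiC : phi (surfcoefC b1 b2 c1 c2 d1 d2 e1 e2) =
  surfcoefC (phi b1) (phi b2) (phi c1) (phi c2) (phi d1) (phi d2) (phi e1) (phi e2).
Proof. by rewrite /surfcoefC !(rmorphD, rmorphB, rmorphM, rmorphN). Qed.
Lemma phiD : phi (surfcoefD d1 d2 e1 e2) = surfcoefD (phi d1) (phi d2) (phi e1) (phi e2).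
Proof. by rewrite /surfcoefD !(rmorphD, rmorphB, rmorphM, rmorphN). Qed.
Lemma phiD1 : phi (delta1 w a1 b1 b2 c1 c2 e1 e2) =
  delta1 (phi w) (phi a1) (phi b1) (phi b2) (phi c1) (phi c2) (phi e1) (phi e2).
Proof. by rewrite /delta1 !(rmorph_nat, rmorphD, rmorphB, rmorphM, rmorphN). Qed.
Lemma phiD2 : phi (delta2 w a2 b1 b2 c1 c2 e1 e2) =
  delta2 (phi w) (phi a2) (phi b1) (phi b2) (phi c1) (phi c2) (phi e1) (phi e2).
Proof. by rewrite /delta2 !(rmorph_nat, rmorphD, rmorphB, rmorphM, rmorphN). Qed.
End PhiCoef.

Lemma sing_info (F M : fieldType) (phi : {rmorphism F -> M})
  (w a1 a2 b1 b2 c1 c2 e1 e2 : F) (P : 'I_4 -> M) :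
  (2 : F) != 0 -> w != 0 -> b2 != 0 -> (forall x : F, x ^+ 2 != w) ->
  ~ (delta1 w a1 b1 b2 c1 c2 e1 e2 = 0 /\ delta2 w a2 b1 b2 c1 c2 e1 e2 = 0) ->
  singular_point (surface_poly (phi w) (phi b1) (phi b2) (phi 1) (phi 0)
      (phi (surfcoefA a1 a2 b1 b2)) (phi (surfcoefB a1 a2 b1 b2 c1 c2 1 0))
      (phi (surfcoefC b1 b2 c1 c2 1 0 e1 e2)) (phi (surfcoefD 1 0 e1 e2))) P ->
  P i0 = 0 /\ P i1 = 0 /\ (P i2 != 0 \/ P i3 != 0) /\
      cubf (phi (surfcoefA a1 a2 b1 b2)) (phi (surfcoefB a1 a2 b1 b2 c1 c2 1 0))
      (phi (surfcoefC b1 b2 c1 c2 1 0 e1 e2)) (phi (surfcoefD 1 0 e1 e2)) (P i2) (P i3) = 0 /\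
      cubX (phi (surfcoefA a1 a2 b1 b2)) (phi (surfcoefB a1 a2 b1 b2 c1 c2 1 0))
      (phi (surfcoefC b1 b2 c1 c2 1 0 e1 e2)) (phi (surfcoefD 1 0 e1 e2)) (P i2) (P i3) = 0 /\
      cubZ (phi (surfcoefA a1 a2 b1 b2)) (phi (surfcoefB a1 a2 b1 b2 c1 c2 1 0))
      (phi (surfcoefC b1 b2 c1 c2 1 0 e1 e2)) (phi (surfcoefD 1 0 e1 e2)) (P i2) (P i3) = 0.
Proof.
move=> h2 hw hb2 hsq hD [[i hi] [h0 hd]].
have E0 := h0; have E1 := hd i0; have E2 := hd i1; have E3 := hd i2; have E4 := hd i3.
rewrite surf_eval rmorph1 rmorph0 in E0.
rewrite surf_d0 rmorph1 rmorph0 in E1.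
rewrite surf_d1 rmorph1 rmorph0 in E2.
rewrite surf_d2 in E3.
rewrite surf_d3 rmorph1 rmorph0 in E4.
have h2M : (2 : M) != 0 by rewrite -(rmorph_nat phi) fmorph_eq0.
have hwM : phi w != 0 by rewrite fmorph_eq0.
have hb2M : phi b2 != 0 by rewrite fmorph_eq0.
have hDM : forall r, r * r = phi w ->
    delta1 (phi w) (phi a1) (phi b1) (phi b2) (phi c1) (phi c2) (phi e1) (phi e2)
    - r * delta2 (phi w) (phi a2) (phi b1) (phi b2) (phi c1) (phi c2) (phi e1) (phi e2) != 0.
  move=> r hr; rewrite -phiD1 -phiD2; apply/negP => /eqP h.
  case: (eqVneq (delta2 w a2 b1 b2 c1 c2 e1 e2) 0) => [h20|h2n0].
    apply: hD; split => //.
    by move/eqP: h; rewrite h20 rmorph0 mulr0 subr0 fmorph_eq0 => /eqP.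
  have hr' : r = phi (delta1 w a1 b1 b2 c1 c2 e1 e2 / delta2 w a2 b1 b2 c1 c2 e1 e2).
    by rewrite fmorph_div (subr0_eq h) mulfK // fmorph_eq0.
  move: (hsq (delta1 w a1 b1 b2 c1 c2 e1 e2 / delta2 w a2 b1 b2 c1 c2 e1 e2)).
  by rewrite -(fmorph_eq phi) rmorphXn -hr' expr2 hr eqxx.
have eB : phi (surfcoefB a1 a2 b1 b2 c1 c2 1 0) =
    surfcoefB (phi a1) (phi a2) (phi b1) (phi b2) (phi c1) (phi c2) 1 0 by rewrite phiB rmorph1 rmorph0.
have eC : phi (surfcoefC b1 b2 c1 c2 1 0 e1 e2) =
    surfcoefC (phi b1) (phi b2) (phi c1) (phi c2) 1 0 (phi e1) (phi e2) by rewrite phiC rmorph1 rmorph0.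
have eD : phi (surfcoefD 1 0 e1 e2) = surfcoefD 1 0 (phi e1) (phi e2) by rewrite phiD rmorph1 rmorph0.
have [ht1 ht2] := core h2M hwM hb2M hDM (phiA _ _ _ _ _) eB eC eD E0 E1 E2 E3 E4.
split; first by []. split; first by []. split.
- case: i hi => [[|[|[|[|//]]]] Hi] hi.
  + by move: hi; rewrite (_ : Ordinal Hi = i0) ?ht1 ?eqxx //; apply: val_inj.
  + by move: hi; rewrite (_ : Ordinal Hi = i1) ?ht2 ?eqxx //; apply: val_inj.
  + by left; move: hi; rewrite (_ : Ordinal Hi = i2) //; apply: val_inj.
  + by right; move: hi; rewrite (_ : Ordinal Hi = i3) //; apply: val_inj.
split; [|split].
- by move: E0; rewrite ht1 ht2 /cubf => <-; ring.
- by move: E3; rewrite ht1 ht2 /cubX => <-; ring.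
- by move: E4; rewrite ht1 ht2 /cubZ => <-; ring.
Qed.

Lemma delta_ident (F L : fieldType) (f : {rmorphism F -> L}) (eps : L)
  (w a1 a2 b1 b2 c1 c2 e1 e2 : F) : eps ^+ 2 = f w ->
  (f a1 + eps * f a2) + (f e1 + eps * f e2) * ((f b1 + eps * f b2) * (f b1 + eps * f b2))
  - (f b1 + eps * f b2) * (f c1 + eps * f c2)
  = f (delta1 w a1 b1 b2 c1 c2 e1 e2) + eps * f (delta2 w a2 b1 b2 c1 c2 e1 e2).
Proof.
move=> he.
by rewrite /delta1 /delta2 !(rmorph_nat, rmorphD, rmorphB, rmorphM, rmorphN) -he; ring.
Qed.

Lemma ord4_cases (i : 'I_4) : i = i0 \/ i = i1 \/ i = i2 \/ i = i3.
Proof.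
case: i => [[|[|[|[|//]]]] Hi].
- by left; apply: val_inj.
- by right; left; apply: val_inj.
- by right; right; left; apply: val_inj.
- by right; right; right; apply: val_inj.
Qed.

Theorem mainTheorem6
  (F : finFieldType) (L : fieldExtType F)
  (odd_char : (2%:R : F) != 0)
  (dimL : \dim (fullv : {vspace L}) = 2%N)
  (w : F) (w_nonsq : forall x : F, x ^+ 2 != w)
  (eps : L) (eps2 : eps ^+ 2 = (in_alg L w))
  (a1 a2 b1 b2 c1 c2 e1 e2 : F)
  (conic_nonsing : forall v : 'I_3 -> L,
     ~ singular_point
         (conic_poly ((in_alg L a1) + eps * (in_alg L a2)) ((in_alg L b1) + eps * (in_alg L b2))
                     ((in_alg L c1) + eps * (in_alg L c2)) 1 ((in_alg L e1) + eps * (in_alg L e2))) v)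
  (b_notin_Fq : b2 != 0) :
  let d1 : F := 1 in let d2 : F := 0 in
  forall (M : closedFieldType) (phi : {rmorphism F -> M}),
  let S : {mpoly M[4]} :=
    surface_poly (phi w) (phi b1) (phi b2) (phi d1) (phi d2)
      (phi (surfcoefA a1 a2 b1 b2)) (phi (surfcoefB a1 a2 b1 b2 c1 c2 d1 d2))
      (phi (surfcoefC b1 b2 c1 c2 d1 d2 e1 e2)) (phi (surfcoefD d1 d2 e1 e2)) in
  (forall P Q : 'I_4 -> M, singular_point S P -> singular_point S Q ->
     proj_eq P Q)
  /\ (forall P : 'I_4 -> M, singular_point S P ->
       double_point S P
       /\ exists P0 : 'I_4 -> F, proj_eq P (fun i => phi (P0 i))).
Proof.
move=> d1 d2 M phi S.
have h2L : (2 : L) != 0 by rewrite -(rmorph_nat (in_alg L)) fmorph_eq0.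
have hw : w != 0.
  by apply/eqP => hw0; move: (w_nonsq 0); rewrite hw0 expr2 mulr0 eqxx.
have hDL := conic_delta h2L conic_nonsing.
have hD : ~ (delta1 w a1 b1 b2 c1 c2 e1 e2 = 0 /\ delta2 w a2 b1 b2 c1 c2 e1 e2 = 0).
  case=> hd1 hd2.
  have E : forall x : L, x = in_alg L (delta1 w a1 b1 b2 c1 c2 e1 e2)
      + eps * in_alg L (delta2 w a2 b1 b2 c1 c2 e1 e2) -> x != 0 -> False.
    by move=> x ->; rewrite hd1 hd2 !rmorph0 mulr0 addr0 eqxx.
  apply: (E _ _ hDL); exact: delta_ident eps2.
have h2M : (2 : M) != 0 by rewrite -(rmorph_nat phi) fmorph_eq0.
have hnz : [|| phi (surfcoefA a1 a2 b1 b2) != 0, phi (surfcoefB a1 a2 b1 b2 c1 c2 1 0) != 0,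
     phi (surfcoefC b1 b2 c1 c2 1 0 e1 e2) != 0 | phi (surfcoefD 1 0 e1 e2) != 0].
  rewrite !fmorph_eq0 -!negb_and; apply/negP => /and4P[/eqP hA /eqP hB /eqP hC /eqP hD'].
  apply: hD.
  have ee2 : e2 = - surfcoefD 1 0 e1 e2 by rewrite /surfcoefD; ring.
  rewrite hD' oppr0 in ee2.
  have ec2 : c2 = b2 * e1 - b1 * e2 - surfcoefC b1 b2 c1 c2 1 0 e1 e2 by rewrite /surfcoefC; ring.
  rewrite hC subr0 in ec2.
  have ea2 : a2 = b2 * c1 - b1 * c2 - surfcoefB a1 a2 b1 b2 c1 c2 1 0 by rewrite /surfcoefB; ring.
  rewrite hB subr0 in ea2.
  split; last by rewrite /delta2 ea2 ec2 ee2; ring.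
  have : b2 * delta1 w a1 b1 b2 c1 c2 e1 e2 = surfcoefA a1 a2 b1 b2.
    by rewrite /delta1 /surfcoefA ea2 ec2 ee2; ring.
  by rewrite hA => /eqP; rewrite mulf_eq0 (negbTE b_notin_Fq) => /eqP.
have SI := fun P (hP : singular_point S P) => sing_info odd_char hw b_notin_Fq w_nonsq hD hP.
split.
  move=> P Q hP hQ.
  have [p0 [p1 [pnz [pf [pX pZ]]]]] := SI P hP.
  have [q0 [q1 [qnz [qf [qX qZ]]]]] := SI Q hQ.
  have hdet := cubic_unique h2M hnz pf pX pZ qf qX qZ.
  case: (eqVneq (Q i2) 0) => [q20|q2n0].
    have q3n0 : Q i3 != 0 by case: qnz => //; rewrite q20 eqxx.
    have p20 : P i2 = 0 by move/eqP: hdet; rewrite q20 mul0r mulf_eq0 (negbTE q3n0) orbF => /eqP.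
    have p3n0 : P i3 != 0 by case: pnz => //; rewrite p20 eqxx.
    exists (P i3 / Q i3); split; first by rewrite mulf_neq0 ?invr_neq0.
    move=> i; case: (ord4_cases i) => [->|[->|[->|->]]].
    - by rewrite p0 q0 mulr0.
    - by rewrite p1 q1 mulr0.
    - by rewrite p20 q20 mulr0.
    - by rewrite divfK.
  have p2n0 : P i2 != 0.
    apply/negP => /eqP p20; move: hdet; rewrite p20 mul0r => /esym/eqP.
    rewrite mulf_eq0 (negbTE q2n0) /= => /eqP p30.
    by case: pnz; rewrite ?p20 ?p30 eqxx.
  exists (P i2 / Q i2); split; first by rewrite mulf_neq0 ?invr_neq0.
  move=> i; case: (ord4_cases i) => [->|[->|[->|->]]].
  - by rewrite p0 q0 mulr0.
  - by rewrite p1 q1 mulr0.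
  - by rewrite divfK.
  - by rewrite mulrAC hdet mulrAC divff // mul1r.
move=> P hP.
have [p0 [p1 [pnz [pf [pX pZ]]]]] := SI P hP.
split.
  split => //.
  case: (eqVneq (P i2) 0) => [p20|p2n0].
    have p3n0 : P i3 != 0 by case: pnz => //; rewrite p20 eqxx.
    exists i0, i1; rewrite /S surf_d01 /d1 /d2 rmorph1 p20 mulr0 add0r mul1r.
    by rewrite mulf_neq0.
  exists i0, i0; rewrite /S surf_d00 /d1 /d2 rmorph0 mul0r addr0.
  by rewrite !mulf_neq0 // ?fmorph_eq0 // -mulN1r mulf_neq0 // oppr_eq0 oner_eq0.
have z0q : (0 : M) ^+ #|F| = 0 by rewrite -(rmorph0 phi) fr_phi rmorph0.
have fq := congr1 (fun x => x ^+ #|F|) pf; rewrite /= z0q -fr_cubf in fq.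
have fX := congr1 (fun x => x ^+ #|F|) pX; rewrite /= z0q -fr_cubX in fX.
have fZ := congr1 (fun x => x ^+ #|F|) pZ; rewrite /= z0q -fr_cubZ in fZ.
have hdet := cubic_unique h2M hnz pf pX pZ fq fX fZ.
case: (eqVneq (P i2) 0) => [p20|p2n0].
  have p3n0 : P i3 != 0 by case: pnz => //; rewrite p20 eqxx.
  exists (fun i => if i == i3 then 1 else 0), (P i3); split => //.
  move=> i; case: (ord4_cases i) => [->|[->|[->|->]]] /=.
  - by rewrite p0 rmorph0 mulr0.
  - by rewrite p1 rmorph0 mulr0.
  - by rewrite p20 rmorph0 mulr0.
  - by rewrite rmorph1 mulr1.
have p2qn0 : P i2 ^+ #|F| != 0 by rewrite expf_neq0.
have hy : (P i3 / P i2) ^+ #|F| = P i3 / P i2.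
  rewrite exprMn exprVn.
  have e : P i3 ^+ #|F| = P i2 ^+ #|F| * P i3 / P i2 by rewrite -hdet; field.
  by rewrite e mulrAC [_ * P i3 * _]mulrAC divff // mul1r.
have [c hc] := fr_fixed phi hy.
exists (fun i => if i == i2 then 1 else if i == i3 then c else 0), (P i2); split => //.
move=> i; case: (ord4_cases i) => [->|[->|[->|->]]] /=.
- by rewrite p0 rmorph0 mulr0.
- by rewrite p1 rmorph0 mulr0.
- by rewrite rmorph1 mulr1.
- by rewrite -hc mulrC divfK.
Qed.
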